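(* Let $\sigma$ be a regular $k$-gon in $\mathbb{R}^2$, $k\ge 4$, with diameter $w$ satisfying $2^j\le w<2^{j+1}$ for some integer $j\ge 0$, and let $\mathcal{K}_\sigma$ be its shrunk set. Then $\sigma=\bigcup_{\sigma'\in\mathcal{K}_\sigma}\sigma'$.
   Context: The diameter of a regular $k$-gon is the diameter of its smallest enclosing disk. Shrunk set: if $w=2^j$, then $\mathcal{K}_\sigma=\{\sigma\}$. Otherwise, let $\sigma'_0$ be the concentric scaled copy of $\sigma$ of diameter $2^j$, let $c_1,\dots,c_k$ be the corners of $\sigma$, and for each $i\in[k]$ let $\sigma'_i$ be the image of $\sigma$ under the homothety with center $c_i$ and ratio $2^j/w$ (so $\sigma'_i$ is a translate of $\sigma'_0$ contained in $\sigma$ having $c_i$ as a corner); then $\mathcal{K}_\sigma=\{\sigma'_0,\sigma'_1,\dots,\sigma'_k\}$. *)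

(* Defs.v *)
From Stdlib Require Import Reals.
Open Scope R_scope.

Definition pt := (R * R)%type.

Fixpoint sumR (n : nat) (f : nat -> R) : R :=
  match n with
  | O => 0
  | S m => sumR m f + f m
  end.

Definition corner (k : nat) (cx cy r th : R) (i : nat) : pt :=
  (cx + r * cos (th + 2 * PI * INR i / INR k),
   cy + r * sin (th + 2 * PI * INR i / INR k)).

Definition conv_hull (k : nat) (v : nat -> pt) (p : pt) : Prop :=
  exists l : nat -> R,
    (forall i, (i < k)%nat -> 0 <= l i) /\
    sumR k l = 1 /\
    fst p = sumR k (fun i => l i * fst (v i)) /\
    snd p = sumR k (fun i => l i * snd (v i)).

Definition regular_polygon (k : nat) (cx cy r th : R) : pt -> Prop :=
  conv_hull k (corner k cx cy r th).

Definition in_disk (c : pt) (rho : R) (p : pt) : Prop :=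
  0 <= rho /\
  (fst p - fst c) ^ 2 + (snd p - snd c) ^ 2 <= rho ^ 2.

Definition enclosing_diameter (S : pt -> Prop) (w : R) : Prop :=
  0 <= w /\
  (exists c, forall p, S p -> in_disk c (w / 2) p) /\
  (forall c rho, (forall p, S p -> in_disk c rho p) -> w <= 2 * rho).

Definition homothety (a : pt) (t : R) (S : pt -> Prop) : pt -> Prop :=
  fun p => exists q, S q /\
    p = (fst a + t * (fst q - fst a), snd a + t * (snd q - snd a)).

Definition shrunk_set (k : nat) (cx cy r th w : R) (j : nat)
    (tau : pt -> Prop) : Prop :=
  let sigma := regular_polygon k cx cy r th in
  (w = 2 ^ j /\ tau = sigma) \/
  (w <> 2 ^ j /\
    (tau = homothety (cx, cy) (2 ^ j / w) sigma \/
     exists i, (i < k)%nat /\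
       tau = homothety (corner k cx cy r th i) (2 ^ j / w) sigma)).

(* Main.v *)
Require Import Defs.
From Stdlib Require Import Reals Lra Lia Psatz Arith.
Open Scope R_scope.

Lemma sumR_ext n f g : (forall m, (m < n)%nat -> f m = g m) -> sumR n f = sumR n g.
Proof. induction n; intros H; simpl; auto. rewrite IHn; [rewrite H|]; auto; intros; apply H; lia. Qed.

Lemma sumR_le n f g : (forall m, (m < n)%nat -> f m <= g m) -> sumR n f <= sumR n g.
Proof. induction n; intros H; simpl; [lra|]. assert (f n <= g n) by (apply H; lia).
 assert (sumR n f <= sumR n g) by (apply IHn; intros; apply H; lia). lra. Qed.

Lemma sumR_lin3 n a b c f g h :
  sumR n (fun m => a * f m + b * g m + c * h m) = a * sumR n f + b * sumR n g + c * sumR n h.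
Proof. induction n; simpl; [ring|]. rewrite IHn; ring. Qed.

Lemma sumR_scal n a f : sumR n (fun m => a * f m) = a * sumR n f.
Proof. induction n; simpl; [ring|]. rewrite IHn; ring. Qed.

Lemma sumR_ind n i f : sumR n (fun m => (if Nat.eqb m i then 1 else 0) * f m) =
   if Nat.ltb i n then f i else 0.
Proof. induction n as [|n IHn]; simpl; [destruct i; reflexivity|]. rewrite IHn.
 destruct (Nat.eqb n i) eqn:E.
 - apply Nat.eqb_eq in E; subst i. replace (Nat.ltb n n) with false by (symmetry; apply Nat.ltb_ge; lia).
   replace (Nat.ltb n (S n)) with true by (symmetry; apply Nat.ltb_lt; lia). ring.
 - apply Nat.eqb_neq in E. destruct (Nat.ltb i n) eqn:E2.
   + apply Nat.ltb_lt in E2. replace (Nat.ltb i (S n)) with true by (symmetry; apply Nat.ltb_lt; lia). ring.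
   + apply Nat.ltb_ge in E2. replace (Nat.ltb i (S n)) with false by (symmetry; apply Nat.ltb_ge; lia). ring.
Qed.

Lemma conv_vertex k v i : (i < k)%nat -> conv_hull k v (v i).
Proof. intros Hi. exists (fun m => if Nat.eqb m i then 1 else 0).
 replace (Nat.ltb i k) with true in * by (symmetry; apply Nat.ltb_lt; lia).
 split; [intros m _; destruct (Nat.eqb m i); lra|].
 split; [|split].
 - rewrite (sumR_ext _ _ (fun m => (if Nat.eqb m i then 1 else 0) * 1)) by (intros; ring).
   rewrite sumR_ind. replace (Nat.ltb i k) with true by (symmetry; apply Nat.ltb_lt; lia). auto.
 - rewrite sumR_ind. replace (Nat.ltb i k) with true by (symmetry; apply Nat.ltb_lt; lia). auto.
 - rewrite sumR_ind. replace (Nat.ltb i k) with true by (symmetry; apply Nat.ltb_lt; lia). auto.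
Qed.

Lemma conv3 k v p1 p2 p3 a b c (q : pt) :
  conv_hull k v p1 -> conv_hull k v p2 -> conv_hull k v p3 ->
  0 <= a -> 0 <= b -> 0 <= c -> a + b + c = 1 ->
  fst q = a * fst p1 + b * fst p2 + c * fst p3 ->
  snd q = a * snd p1 + b * snd p2 + c * snd p3 -> conv_hull k v q.
Proof.
 intros [l1 [P1 [S1 [X1 Y1]]]] [l2 [P2 [S2 [X2 Y2]]]] [l3 [P3 [S3 [X3 Y3]]]] Ha Hb Hc Habc Hx Hy.
 exists (fun m => a * l1 m + b * l2 m + c * l3 m). split; [|split; [|split]].
 - intros m Hm. specialize (P1 m Hm); specialize (P2 m Hm); specialize (P3 m Hm). nra.
 - rewrite sumR_lin3, S1, S2, S3. lra.
 - rewrite (sumR_ext _ _ (fun m => a * (l1 m * fst (v m)) + b * (l2 m * fst (v m)) + c * (l3 m * fst (v m)))) by (intros; ring).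
   rewrite sumR_lin3, <- X1, <- X2, <- X3. auto.
 - rewrite (sumR_ext _ _ (fun m => a * (l1 m * snd (v m)) + b * (l2 m * snd (v m)) + c * (l3 m * snd (v m)))) by (intros; ring).
   rewrite sumR_lin3, <- Y1, <- Y2, <- Y3. auto.
Qed.

Lemma sumR_shift n h : sumR n (fun m => h (S m)) = sumR n h - h 0%nat + h n.
Proof. induction n; simpl; [ring|]. rewrite IHn. ring. Qed.

Lemma argmax (f : nat -> R) k : (0 < k)%nat -> exists i, (i < k)%nat /\ forall m, (m < k)%nat -> f m <= f i.
Proof. induction k; intros H; [lia|]. destruct k.
 - exists 0%nat; split; [lia|]. intros m Hm; replace m with 0%nat by lia; lra.
 - destruct IHk as [i [Hi Hm]]; [lia|]. destruct (Rle_dec (f (S k)) (f i)).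
   + exists i; split; [lia|]. intros m Hm'. destruct (Nat.eq_dec m (S k)); [subst; auto|]. apply Hm; lia.
   + exists (S k); split; [lia|]. intros m Hm'. destruct (Nat.eq_dec m (S k)); [subst; lra|].
     specialize (Hm m ltac:(lia)). lra.
Qed.

Definition al k := 2 * PI / INR k.
Definition cs k th x := cos (th + al k * x).
Definition sn k th x := sin (th + al k * x).

Lemma INRk4 k : (4 <= k)%nat -> 4 <= INR k.
Proof. intros H. apply le_INR in H. simpl in H. lra. Qed.

Lemma al_bounds k : (4 <= k)%nat -> 0 < al k /\ al k <= PI / 2.
Proof. intros H. pose proof (INRk4 k H). pose proof PI_RGT_0. unfold al. split.
 - apply Rdiv_lt_0_compat; lra.
 - apply Rmult_le_reg_r with (INR k); [lra|]. field_simplify; [|lra]. nra. Qed.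

Lemma C_bounds k : (4 <= k)%nat -> 0 <= cos (al k) < 1.
Proof. intros H. destruct (al_bounds k H). pose proof PI_RGT_0. split.
 - apply cos_ge_0; lra.
 - rewrite <- cos_0. apply cos_decreasing_1; lra. Qed.

Lemma Ch_pos k : (4 <= k)%nat -> 0 < cos (al k / 2).
Proof. intros H. destruct (al_bounds k H). apply cos_gt_0; lra. Qed.

Lemma corner_eq k cx cy r th i : (4 <= k)%nat ->
  corner k cx cy r th i = (cx + r * cs k th (INR i), cy + r * sn k th (INR i)).
Proof. intros H. pose proof (INRk4 k H). unfold corner, cs, sn, al.
 replace (2 * PI * INR i / INR k) with (2 * PI / INR k * INR i) by (field; lra). reflexivity. Qed.

Lemma inner k th x y : cs k th x * cs k th y + sn k th x * sn k th y = cos (al k * (x - y)).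
Proof. unfold cs, sn. rewrite <- cos_minus. f_equal. ring. Qed.

Lemma norm1 k th x : cs k th x * cs k th x + sn k th x * sn k th x = 1.
Proof. rewrite inner. replace (al k * (x - x)) with 0 by ring. apply cos_0. Qed.

Lemma rec_cs k th x : cs k th (x + 1) + cs k th (x - 1) = 2 * cos (al k) * cs k th x.
Proof. unfold cs. replace (th + al k * (x + 1)) with ((th + al k * x) + al k) by ring.
 replace (th + al k * (x - 1)) with ((th + al k * x) - al k) by ring.
 rewrite cos_plus, cos_minus. ring. Qed.

Lemma rec_sn k th x : sn k th (x + 1) + sn k th (x - 1) = 2 * cos (al k) * sn k th x.
Proof. unfold sn. replace (th + al k * (x + 1)) with ((th + al k * x) + al k) by ring.
 replace (th + al k * (x - 1)) with ((th + al k * x) - al k) by ring.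
 rewrite sin_plus, sin_minus. ring. Qed.

Lemma per_cs k th x : (4 <= k)%nat -> cs k th (x + INR k) = cs k th x.
Proof. intros H. pose proof (INRk4 k H). unfold cs, al.
 replace (th + 2 * PI / INR k * (x + INR k)) with ((th + 2 * PI / INR k * x) + 2 * INR 1 * PI)
   by (simpl; field; lra). apply cos_period. Qed.

Lemma per_sn k th x : (4 <= k)%nat -> sn k th (x + INR k) = sn k th x.
Proof. intros H. pose proof (INRk4 k H). unfold sn, al.
 replace (th + 2 * PI / INR k * (x + INR k)) with ((th + 2 * PI / INR k * x) + 2 * INR 1 * PI)
   by (simpl; field; lra). apply sin_period. Qed.

Lemma sum_zero_gen k (g : R -> R) : (4 <= k)%nat ->
  (forall x, g (x + 1) + g (x - 1) = 2 * cos (al k) * g x) ->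
  (forall x, g (x + INR k) = g x) ->
  sumR k (fun m => g (INR m)) = 0.
Proof. intros H Hr Hp. destruct (C_bounds k H).
 set (Sm := sumR k (fun m => g (INR m))).
 assert (E1 : sumR k (fun m => g (INR m + 1)) = Sm).
 { rewrite (sumR_ext _ _ (fun m => g (INR (S m)))) by (intros m _; cbv beta; rewrite S_INR; auto).
   rewrite (sumR_shift k (fun m => g (INR m))). simpl.
   rewrite <- (Hp 0). replace (0 + INR k) with (INR k) by ring. unfold Sm. ring. }
 assert (E2 : sumR k (fun m => g (INR m - 1)) = Sm).
 { pose proof (sumR_shift k (fun m => g (INR m - 1))) as E. cbv beta in E; change (INR 0) with 0 in E.
   rewrite (sumR_ext _ _ (fun m => g (INR m))) in E by (intros m _; cbv beta; rewrite S_INR; f_equal; ring).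
   rewrite <- (Hp (0 - 1)) in E. replace (0 - 1 + INR k) with (INR k - 1) in E by ring.
   fold Sm in E. lra. }
 assert (E3 : sumR k (fun m => g (INR m + 1)) + sumR k (fun m => g (INR m - 1)) = 2 * cos (al k) * Sm).
 { unfold Sm. rewrite <- sumR_scal.
   pose proof (sumR_lin3 k 1 1 0 (fun m => g (INR m + 1)) (fun m => g (INR m - 1)) (fun m => 0)) as L.
   cbv beta in L. rewrite (sumR_ext _ (fun m => 2 * cos (al k) * g (INR m))
     (fun m => 1 * g (INR m + 1) + 1 * g (INR m - 1) + 0 * 0)) by (intros m _; cbv beta; rewrite <- Hr; ring).
   rewrite L. ring. }
 rewrite E1, E2 in E3. fold Sm. nra.
Qed.

Lemma cos_bound k z : (4 <= k)%nat -> al k / 2 <= z <= 2 * PI - al k / 2 -> cos z <= cos (al k / 2).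
Proof. intros H [H1 H2]. destruct (al_bounds k H). pose proof PI_RGT_0.
 destruct (Rle_dec z PI).
 - destruct (Rle_lt_or_eq_dec _ _ H1) as [Hl|He]; [|subst; lra].
   left. apply cos_decreasing_1; lra.
 - assert (Hc : cos z = cos (2 * PI - z)).
   { rewrite cos_minus, cos_2PI, sin_2PI. ring. }
   rewrite Hc. destruct (Rle_lt_or_eq_dec (al k / 2) (2 * PI - z)) as [Hl|He]; [lra| |rewrite He; lra].
   left. apply cos_decreasing_1; lra.
Qed.

Lemma alk k : (4 <= k)%nat -> al k * INR k = 2 * PI.
Proof. intros H. pose proof (INRk4 k H). unfold al. field. lra. Qed.

Lemma edge k y : (4 <= k)%nat ->
  (exists D, (1 <= D <= k)%nat /\ (y = INR D \/ y = 1 - INR D)) ->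
  cos (al k * y) + cos (al k * (y - 1)) <= 1 + cos (al k).
Proof. intros H [D [HD Hy]]. destruct (al_bounds k H). pose proof (Ch_pos k H).
 pose proof (alk k H).
 set (A := al k * (y - /2)). set (B := al k / 2).
 replace (al k * y) with (A + B) by (unfold A, B; field).
 replace (al k * (y - 1)) with (A - B) by (unfold A, B; field).
 assert (Hc2 : cos (al k) = 2 * cos B * cos B - 1) by (rewrite <- cos_2a_cos; unfold B; f_equal; field).
 rewrite cos_plus, cos_minus, Hc2.
 assert (cos A <= cos B).
 { assert (HD1 : 1 <= INR D) by (apply (le_INR 1); lia).
   assert (HD2 : INR D <= INR k) by (apply le_INR; lia).
   assert (al k * (INR D - /2) <= al k * (INR k - /2)) by (apply Rmult_le_compat_l; lra).
   assert (al k * 1 <= al k * INR D) by (apply Rmult_le_compat_l; lra).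
   destruct Hy as [Hy|Hy]; unfold A; rewrite Hy.
   - apply cos_bound; auto. unfold B. split; nra.
   - assert (Hq : al k * (1 - INR D - /2) = - (al k * (INR D - /2))) by field. rewrite Hq, cos_neg.
     apply cos_bound; auto. unfold B. split; nra. }
 fold B in H2. nra.
Qed.

Lemma decomp a b c d e1 e2 C : a*a+b*b=1 -> c*c+d*d=1 -> a*c+b*d = C -> 0 <= C < 1 ->
 e1*c + e2*d <= e1*a + e2*b -> e1*(2*C*a - c) + e2*(2*C*b - d) <= e1*c + e2*d ->
 exists be ga, 0 <= ga <= be /\ e1 = be*a + ga*c /\ e2 = be*b + ga*d.
Proof. intros Hu Hv Huv HC H1 H2.
 set (det := a*d - b*c).
 assert (Hdet : det * det = (a*a+b*b)*(c*c+d*d) - (a*c+b*d)*(a*c+b*d)) by (unfold det; ring).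
 rewrite Hu, Hv, Huv in Hdet.
 assert (Hd0 : det <> 0) by (intro Z; rewrite Z in Hdet; nra).
 set (be := (e1*d - e2*c)/det). set (ga := (a*e2 - b*e1)/det).
 assert (E1 : e1 = be*a + ga*c) by (unfold be, ga; field_simplify; [|auto]; unfold det; field; auto).
 assert (E2 : e2 = be*b + ga*d) by (unfold be, ga; field_simplify; [|auto]; unfold det; field; auto).
 clearbody be ga. exists be, ga. split; [|split; auto].
 rewrite E1, E2 in H1, H2.
 assert (F1 : (be*a+ga*c)*c + (be*b+ga*d)*d = be*C + ga) by (transitivity (be*(a*c+b*d) + ga*(c*c+d*d)); [ring | rewrite Huv, Hv; ring]).
 assert (F2 : (be*a+ga*c)*a + (be*b+ga*d)*b = be + ga*C) by (transitivity (be*(a*a+b*b) + ga*(a*c+b*d)); [ring | rewrite Huv, Hu; ring]).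
 assert (F3 : (be*a+ga*c)*(2*C*a - c) + (be*b+ga*d)*(2*C*b - d) = 2*C*(be + ga*C) - (be*C + ga))
   by (rewrite <- F1, <- F2; ring).
 rewrite F1, F2 in H1. rewrite F3, F1 in H2.
 assert (G1 : 0 <= ga * (1 - C*C)) by nra.
 assert (G2 : 0 <= (be - ga) * (1 - C)) by nra.
 assert (0 < 1 - C*C) by nra.
 assert (0 <= ga). { destruct (Rle_or_lt 0 ga); auto. assert (ga * (1 - C*C) < 0) by (apply Rmult_neg_pos; lra). lra. }
 assert (0 <= be - ga). { destruct (Rle_or_lt 0 (be - ga)); auto. assert ((be-ga) * (1 - C) < 0) by (apply Rmult_neg_pos; lra). lra. }
 lra.
Qed.

Lemma nb k th i s : (4 <= k)%nat -> (i < k)%nat -> (s = 1 \/ s = -1) ->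
  exists j, (j < k)%nat /\ cs k th (INR j) = cs k th (INR i + s) /\ sn k th (INR j) = sn k th (INR i + s).
Proof. intros H Hi [Hs|Hs]; subst s.
 - destruct (Nat.eq_dec (S i) k) as [E|E].
   + exists 0%nat. split; [lia|]. change (INR 0) with 0.
     assert (INR i + 1 = 0 + INR k) by (rewrite <- E, S_INR; ring). rewrite H0, per_cs, per_sn; auto.
   + exists (S i). split; [lia|]. rewrite S_INR; auto.
 - destruct i as [|i'].
   + exists (k - 1)%nat. split; [lia|].
     assert (INR (k - 1) = (INR 0 + -1) + INR k) by (rewrite minus_INR by lia; simpl; ring).
     rewrite H0, per_cs, per_sn; auto.
   + exists i'. split; [lia|]. rewrite S_INR. replace (INR i' + 1 + -1) with (INR i') by ring. auto.
Qed.

Lemma edge_pair k th i m s : (4 <= k)%nat -> (i < k)%nat -> (m < k)%nat -> (s = 1 \/ s = -1) ->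
  cs k th (INR m) * (cs k th (INR i) + cs k th (INR i + s)) +
  sn k th (INR m) * (sn k th (INR i) + sn k th (INR i + s)) <= 1 + cos (al k).
Proof. intros H Hi Hm Hs.
 replace (cs k th (INR m) * (cs k th (INR i) + cs k th (INR i + s)) +
  sn k th (INR m) * (sn k th (INR i) + sn k th (INR i + s))) with
  ((cs k th (INR m) * cs k th (INR i) + sn k th (INR m) * sn k th (INR i)) +
   (cs k th (INR m) * cs k th (INR i + s) + sn k th (INR m) * sn k th (INR i + s))) by ring.
 rewrite !inner. destruct Hs as [Hs|Hs]; subst s.
 - replace (INR m - (INR i + 1)) with ((INR m - INR i) - 1) by ring. apply edge; auto.
   destruct (le_lt_dec m i).
   + exists (i - m + 1)%nat. split; [lia|]. right.
     rewrite plus_INR, minus_INR by lia. simpl. ring.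
   + exists (m - i)%nat. split; [lia|]. left. rewrite minus_INR by lia. ring.
 - replace (INR m - (INR i + -1)) with ((INR m - INR i) + 1) by ring.
   replace (INR m - INR i) with ((INR m - INR i + 1) - 1) at 1 by ring.
   rewrite Rplus_comm. apply edge; auto.
   destruct (le_lt_dec i m).
   + exists (m - i + 1)%nat. split; [lia|]. left.
     rewrite plus_INR, minus_INR by lia. simpl. ring.
   + exists (i - m)%nat. split; [lia|]. right. rewrite minus_INR by lia. ring.
Qed.

Lemma sector k th e1 e2 : (4 <= k)%nat ->
  exists i j be ga, (i < k)%nat /\ (j < k)%nat /\ 0 <= ga <= be /\
   e1 = be * cs k th (INR i) + ga * cs k th (INR j) /\
   e2 = be * sn k th (INR i) + ga * sn k th (INR j) /\
   cs k th (INR i) * cs k th (INR j) + sn k th (INR i) * sn k th (INR j) = cos (al k) /\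
   (forall m, (m < k)%nat -> cs k th (INR m) * (cs k th (INR i) + cs k th (INR j)) +
      sn k th (INR m) * (sn k th (INR i) + sn k th (INR j)) <= 1 + cos (al k)).
Proof. intros H.
 destruct (argmax (fun m => e1 * cs k th (INR m) + e2 * sn k th (INR m)) k ltac:(lia)) as [i [Hi Hmax]].
 cbv beta in Hmax.
 assert (Hs : exists s, (s = 1 \/ s = -1) /\
   e1 * cs k th (INR i - s) + e2 * sn k th (INR i - s) <= e1 * cs k th (INR i + s) + e2 * sn k th (INR i + s)).
 { destruct (Rle_dec (e1 * cs k th (INR i - 1) + e2 * sn k th (INR i - 1)) (e1 * cs k th (INR i + 1) + e2 * sn k th (INR i + 1))).
   - exists 1; split; auto.
   - exists (-1); split; auto. replace (INR i - -1) with (INR i + 1) by ring.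
     replace (INR i - 1) with (INR i + -1) in n by ring. lra. }
 destruct Hs as [s [Hs Hle]].
 destruct (nb k th i s H Hi Hs) as [j [Hj [Ec Es]]].
 destruct (nb k th i (-s) H Hi ltac:(destruct Hs; [right|left]; lra)) as [j' [Hj' [Ec' Es']]].
 pose proof (C_bounds k H) as HC.
 assert (Hin : cs k th (INR i) * cs k th (INR i + s) + sn k th (INR i) * sn k th (INR i + s) = cos (al k)).
 { rewrite inner. destruct Hs; subst s.
   - replace (al k * (INR i - (INR i + 1))) with (- al k) by ring. apply cos_neg.
   - f_equal. ring. }
 assert (Hrec : forall f : R -> R, (forall x, f (x + 1) + f (x - 1) = 2 * cos (al k) * f x) ->
     f (INR i - s) = 2 * cos (al k) * f (INR i) - f (INR i + s)).
 { intros f Hf. rewrite <- (Hf (INR i)). destruct Hs; subst s.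
   - ring.
   - replace (INR i - -1) with (INR i + 1) by ring. replace (INR i + -1) with (INR i - 1) by ring. ring. }
 destruct (decomp (cs k th (INR i)) (sn k th (INR i)) (cs k th (INR i + s)) (sn k th (INR i + s)) e1 e2 (cos (al k)))
   as [be [ga [Hbg [E1 E2]]]].
 - apply norm1.
 - apply norm1.
 - exact Hin.
 - exact HC.
 - rewrite <- Ec, <- Es. apply Hmax; auto.
 - rewrite <- (Hrec (cs k th) (rec_cs k th)), <- (Hrec (sn k th) (rec_sn k th)). exact Hle.
 - exists i, j, be, ga. rewrite Ec, Es. repeat split; auto; try lra.
   intros m Hm. apply edge_pair; auto.
Qed.

Lemma sumR_one n : sumR n (fun _ => 1) = INR n.
Proof. induction n as [|n IHn]; simpl sumR; [simpl; ring|]. rewrite IHn, S_INR. ring. Qed.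

Lemma center_in k cx cy r th : (4 <= k)%nat -> regular_polygon k cx cy r th (cx, cy).
Proof. intros H. pose proof (INRk4 k H).
 assert (Zc : sumR k (fun m => cs k th (INR m)) = 0) by (apply sum_zero_gen; auto; [apply rec_cs | intros; apply per_cs; auto]).
 assert (Zs : sumR k (fun m => sn k th (INR m)) = 0) by (apply sum_zero_gen; auto; [apply rec_sn | intros; apply per_sn; auto]).
 exists (fun _ => / INR k). split; [|split; [|split]].
 - intros; left; apply Rinv_0_lt_compat; lra.
 - rewrite (sumR_ext _ _ (fun m => / INR k * 1)) by (intros; ring). rewrite sumR_scal, sumR_one. field; lra.
 - change (fst (cx, cy)) with cx. rewrite (sumR_ext _ _ (fun m => cx / INR k * 1 + r / INR k * cs k th (INR m) + 0 * 0))
     by (intros m Hm; cbv beta; rewrite corner_eq by auto; simpl fst; simpl snd; field; lra).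
   rewrite sumR_lin3, sumR_one, Zc. field; lra.
 - change (snd (cx, cy)) with cy. rewrite (sumR_ext _ _ (fun m => cy / INR k * 1 + r / INR k * sn k th (INR m) + 0 * 0))
     by (intros m Hm; cbv beta; rewrite corner_eq by auto; simpl fst; simpl snd; field; lra).
   rewrite sumR_lin3, sumR_one, Zs. field; lra.
Qed.

Lemma corner_in k cx cy r th i : (4 <= k)%nat -> (i < k)%nat ->
  regular_polygon k cx cy r th (cx + r * cs k th (INR i), cy + r * sn k th (INR i)).
Proof. intros H Hi. rewrite <- corner_eq by auto. apply conv_vertex; auto. Qed.

Lemma disk_in k cx cy r th e1 e2 : (4 <= k)%nat ->
  e1 * e1 + e2 * e2 <= (1 + cos (al k)) / 2 ->
  regular_polygon k cx cy r th (cx + r * e1, cy + r * e2).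
Proof. intros H He. pose proof (C_bounds k H) as HC.
 destruct (sector k th e1 e2 H) as [i [j [be [ga [Hi [Hj [Hbg [E1 [E2 [Hin _]]]]]]]]]].
 assert (N : e1 * e1 + e2 * e2 = be * be + ga * ga + 2 * cos (al k) * be * ga).
 { rewrite E1, E2. rewrite <- Hin. pose proof (norm1 k th (INR i)). pose proof (norm1 k th (INR j)).
   transitivity (be*be*(cs k th (INR i) * cs k th (INR i) + sn k th (INR i) * sn k th (INR i)) +
     ga*ga*(cs k th (INR j) * cs k th (INR j) + sn k th (INR j) * sn k th (INR j)) +
     2 * be * ga * (cs k th (INR i) * cs k th (INR j) + sn k th (INR i) * sn k th (INR j))); [ring|].
   rewrite H0, H1. ring. }
 assert (Hs : (be + ga) * (be + ga) <= 1).
 { assert (Id : (be+ga)*(be+ga)*(1 + cos (al k)) = 2*(be * be + ga * ga + 2 * cos (al k) * be * ga) - (1 - cos (al k))*((be-ga)*(be-ga))) by ring.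
   assert (0 <= (1 - cos (al k))*((be-ga)*(be-ga))) by (apply Rmult_le_pos; nra).
   assert (X : (be+ga)*(be+ga)*(1 + cos (al k)) <= 1 * (1 + cos (al k))) by lra.
   apply Rmult_le_reg_r in X; lra. }
 assert (Hs1 : be + ga <= 1) by nra.
 apply (conv3 _ _ (cx, cy) (cx + r * cs k th (INR i), cy + r * sn k th (INR i))
   (cx + r * cs k th (INR j), cy + r * sn k th (INR j)) (1 - be - ga) be ga).
 - apply center_in; auto.
 - apply corner_in; auto.
 - apply corner_in; auto.
 - lra. - lra. - lra. - ring.
 - simpl. rewrite E1. ring.
 - simpl. rewrite E2. ring.
Qed.

Lemma divpos x t : 0 <= x -> 0 < t -> 0 <= x / t.
Proof. intros. unfold Rdiv. apply Rmult_le_pos; [auto | left; apply Rinv_0_lt_compat; auto]. Qed.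

Lemma homot_in k cx cy r th (a : pt) t (p : pt) : (4 <= k)%nat -> 0 <= t <= 1 ->
  regular_polygon k cx cy r th a ->
  homothety a t (regular_polygon k cx cy r th) p -> regular_polygon k cx cy r th p.
Proof. intros H Ht Ha [q [Hq Hp]]. apply (conv3 _ _ a q a (1 - t) t 0); auto; try lra; rewrite Hp; simpl; ring. Qed.

Theorem lemma9 (k j : nat) (cx cy r th w : R) :
  (4 <= k)%nat -> 0 < r ->
  enclosing_diameter (regular_polygon k cx cy r th) w ->
  2 ^ j <= w < 2 ^ (j + 1) ->
  forall p : pt,
    regular_polygon k cx cy r th p <->
    exists tau, shrunk_set k cx cy r th w j tau /\ tau p.
Proof.
 intros Hk Hr _ [Hw1 Hw2] p.
 assert (H2j : 0 < 2 ^ j) by (apply pow_lt; lra).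
 assert (Hw2' : w < 2 * 2 ^ j) by (rewrite pow_add in Hw2; simpl in Hw2; lra).
 assert (Hw0 : 0 < w) by lra.
 set (t := 2 ^ j / w).
 assert (Ht1 : t <= 1) by (unfold t; apply Rmult_le_reg_r with w; auto; field_simplify; lra).
 assert (Ht0 : 0 < t) by (unfold t; apply Rdiv_lt_0_compat; lra).
 split.
 - intros Hp. destruct (Req_dec w (2 ^ j)) as [Ew|Ew].
   { exists (regular_polygon k cx cy r th). split; auto. left; split; auto. }
   assert (Ht1' : t < 1) by (unfold t; apply Rmult_lt_reg_r with w; auto; field_simplify; lra).
   assert (Ht2 : 1 / 2 < t) by (unfold t; apply Rmult_lt_reg_r with w; auto; field_simplify; lra).
   destruct p as [p1 p2].
   set (d1 := (p1 - cx) / r). set (d2 := (p2 - cy) / r).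
   assert (Ep1 : p1 = cx + r * d1) by (unfold d1; field; lra).
   assert (Ep2 : p2 = cy + r * d2) by (unfold d2; field; lra).
   pose proof (C_bounds k Hk) as HC.
   destruct (sector k th d1 d2 Hk) as [i [jj [be [ga [Hi [Hj [Hbg [E1 [E2 [Hin Hedge]]]]]]]]]].
   assert (Hsum : be + ga <= 1).
   { destruct Hp as [l [Hl [Sl [X Y]]]]. change (fst (p1, p2)) with p1 in X. change (snd (p1, p2)) with p2 in Y.
     set (wc := cs k th (INR i) + cs k th (INR jj)). set (ws := sn k th (INR i) + sn k th (INR jj)).
     assert (D1 : d1 = sumR k (fun m => l m * cs k th (INR m))).
     { unfold d1. rewrite X. rewrite (sumR_ext _ _ (fun m => cx * l m + r * (l m * cs k th (INR m)) + 0 * 0))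
         by (intros m Hm; cbv beta; rewrite corner_eq by auto; simpl fst; ring).
       rewrite sumR_lin3, Sl. field. lra. }
     assert (D2 : d2 = sumR k (fun m => l m * sn k th (INR m))).
     { unfold d2. rewrite Y. rewrite (sumR_ext _ _ (fun m => cy * l m + r * (l m * sn k th (INR m)) + 0 * 0))
         by (intros m Hm; cbv beta; rewrite corner_eq by auto; simpl snd; ring).
       rewrite sumR_lin3, Sl. field. lra. }
     assert (I1 : d1 * wc + d2 * ws <= 1 + cos (al k)).
     { rewrite D1, D2.
       transitivity (sumR k (fun m => wc * (l m * cs k th (INR m)) + ws * (l m * sn k th (INR m)) + 0 * 0)).
       { rewrite sumR_lin3. right; ring. }
       transitivity (sumR k (fun m => (1 + cos (al k)) * l m)).
       { apply sumR_le. intros m Hm. specialize (Hedge m Hm). specialize (Hl m Hm). fold wc ws in Hedge.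
         assert (l m * (cs k th (INR m) * wc + sn k th (INR m) * ws) <= l m * (1 + cos (al k))) by (apply Rmult_le_compat_l; auto).
         nra. }
       rewrite sumR_scal, Sl. right; ring. }
     assert (I2 : d1 * wc + d2 * ws = (be + ga) * (1 + cos (al k))).
     { rewrite E1, E2. unfold wc, ws. pose proof (norm1 k th (INR i)). pose proof (norm1 k th (INR jj)).
       transitivity (be * (cs k th (INR i) * cs k th (INR i) + sn k th (INR i) * sn k th (INR i)) +
         ga * (cs k th (INR jj) * cs k th (INR jj) + sn k th (INR jj) * sn k th (INR jj)) +
         (be + ga) * (cs k th (INR i) * cs k th (INR jj) + sn k th (INR i) * sn k th (INR jj))); [ring|].
       rewrite H, H0, Hin. ring. }
     rewrite I2 in I1.
     assert (X1 : (be + ga) * (1 + cos (al k)) <= 1 * (1 + cos (al k))) by lra.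
     apply Rmult_le_reg_r in X1; lra. }
   set (ci := cs k th (INR i)). set (si := sn k th (INR i)).
   set (cj := cs k th (INR jj)). set (sj := sn k th (INR jj)).
   fold ci cj in E1. fold si sj in E2.
   assert (Pc := center_in k cx cy r th Hk).
   assert (Pi := corner_in k cx cy r th i Hk Hi). fold ci si in Pi.
   assert (Pj := corner_in k cx cy r th jj Hk Hj). fold cj sj in Pj.
   destruct (Rle_dec (be + ga) t) as [Ca|Ca].
   + exists (homothety (cx, cy) t (regular_polygon k cx cy r th)). split.
     { right. split; [auto|]. left. reflexivity. }
     exists (cx + r * d1 / t, cy + r * d2 / t). split.
     * apply (conv3 _ _ _ _ _ ((t - (be + ga)) / t) (be / t) (ga / t) _ Pc Pi Pj).
       -- apply divpos; lra. -- apply divpos; lra. -- apply divpos; lra.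
       -- field; lra.
       -- simpl. rewrite E1. field; lra.
       -- simpl. rewrite E2. field; lra.
     * simpl. f_equal; [rewrite Ep1 | rewrite Ep2]; field; lra.
   + destruct (Rle_dec (1 - t) be) as [Cb|Cb].
     * exists (homothety (cx + r * ci, cy + r * si) t (regular_polygon k cx cy r th)). split.
       { right. split; [auto|]. right. exists i. split; [auto|]. rewrite corner_eq by auto. reflexivity. }
       exists (cx + r * ci + (p1 - (cx + r * ci)) / t, cy + r * si + (p2 - (cy + r * si)) / t). split.
       -- apply (conv3 _ _ _ _ _ ((1 - be - ga) / t) ((t - 1 + be) / t) (ga / t) _ Pc Pi Pj).
          ++ apply divpos; lra. ++ apply divpos; lra. ++ apply divpos; lra.
          ++ field; lra.
          ++ simpl. rewrite Ep1, E1. field; lra.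
          ++ simpl. rewrite Ep2, E2. field; lra.
       -- simpl. f_equal; field; lra.
     * assert (PW : regular_polygon k cx cy r th (cx + r * ((cj - ci) / 2), cy + r * ((sj - si) / 2))).
       { apply disk_in; auto. pose proof (norm1 k th (INR i)). pose proof (norm1 k th (INR jj)).
         fold ci si cj sj in H, H0, Hin.
         assert (Q : (cj - ci) / 2 * ((cj - ci) / 2) + (sj - si) / 2 * ((sj - si) / 2) =
           ((ci * ci + si * si) + (cj * cj + sj * sj) - 2 * (ci * cj + si * sj)) / 4) by field.
         rewrite Q, H, H0, Hin. lra. }
       exists (homothety (cx + r * ci, cy + r * si) t (regular_polygon k cx cy r th)). split.
       { right. split; [auto|]. right. exists i. split; [auto|]. rewrite corner_eq by auto. reflexivity. }
       exists (cx + r * ci + (p1 - (cx + r * ci)) / t, cy + r * si + (p2 - (cy + r * si)) / t). split.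
       -- apply (conv3 _ _ _ _ _ ((2 * t - 1 + be - ga) / t) (2 * (1 - be - t) / t) ((ga + t - 1 + be) / t) _ Pc PW Pj).
          ++ apply divpos; lra. ++ apply divpos; lra. ++ apply divpos; lra.
          ++ field; lra.
          ++ simpl. rewrite Ep1, E1. field; lra.
          ++ simpl. rewrite Ep2, E2. field; lra.
       -- simpl. f_equal; field; lra.
 - intros [tau [Hs Htau]].
   destruct Hs as [[_ E]|[_ [E|[i [Hi E]]]]]; subst tau; auto.
   + apply (homot_in k cx cy r th (cx, cy) t); auto; [lra | apply center_in; auto].
   + apply (homot_in k cx cy r th (corner k cx cy r th i) t); auto; [lra | apply conv_vertex; auto].
Qed.
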